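(* Let $D_0=\{(p,u)\in\mathbb{R}^2: p>0,\ u>-1\}$ and for $n\ge1$ let $D_n=\Phi^{-1}(D_{n-1})\cap D_0$, where $\Phi^{-1}(D)=\{(p,u): p\ne0,\ \Phi(p,u)\in D\}$. Then for every $n\ge0$ the set $D_n$ is convex.
   Context: $\Phi$ is the partial map of $\mathbb{R}^2$ defined for $p\ne0$ by $\Phi(p,u)=\bigl(p^2(u+1)-1,\ 1/p\bigr)$. *)

(* Defs.v *)
From Stdlib Require Import Reals.
Open Scope R_scope.

Definition Phi (z : R * R) : R * R :=
  let (p, u) := z in (p ^ 2 * (u + 1) - 1, / p).

Definition Phi_preimage (D : R * R -> Prop) : R * R -> Prop :=
  fun z => fst z <> 0 /\ D (Phi z).

Definition D0 : R * R -> Prop := fun z => 0 < fst z /\ -1 < snd z.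

Fixpoint Dn (n : nat) : R * R -> Prop :=
  match n with
  | O => D0
  | S m => fun z => Phi_preimage (Dn m) z /\ D0 z
  end.

Definition convex_set (S : R * R -> Prop) : Prop :=
  forall x y : R * R, S x -> S y -> forall t : R, 0 <= t <= 1 ->
    S (t * fst x + (1 - t) * fst y, t * snd x + (1 - t) * snd y).

(* Main.v *)
Require Import Defs.
From Stdlib Require Import Reals Lra Psatz.
Open Scope R_scope.

Lemma key x1 x2 a b v1 v2 V : 0 < x1 -> x1 <= x2 -> 0 <= a -> 0 <= b -> a + b = 1 ->
  0 <= v1 -> 0 <= v2 -> V * (a*x1+b*x2)^3 = a*v1*x1^3 + b*v2*x2^3 -> V < a*v1 + b*v2 ->
  v2 <= V /\ (v2-1)*(1+x2) <= (V-1)*(1+(a*x1+b*x2)).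
Proof.
  intros hx1 hx12 ha hb hab hv1 hv2 HV HB.
  set (x := a*x1+b*x2) in *.
  assert (Hxx1 : x - x1 = b*(x2-x1)) by (unfold x; nra).
  assert (Hx1x : x1 <= x) by nra.
  assert (Hxx2 : x <= x2) by (unfold x; nra).
  set (P := x2^2+x1*x2+x1^2). set (Q := x^2+x*x1+x1^2).
  assert (HQ : 0 < Q) by (unfold Q; nra).
  assert (HPQ : Q <= P) by (unfold P, Q; nra).
  assert (E1 : V*(x^3-x1^3) - b*v2*(x2^3-x1^3) = x1^3*(a*v1+b*v2-V)) by nra.
  assert (E2 : 0 < x1^3*(a*v1+b*v2-V)) by (apply Rmult_lt_0_compat; [apply pow_lt; lra| lra]).
  assert (E3 : b*(x2^3-x1^3) = (x-x1)*P) by (unfold P; rewrite Hxx1; ring).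
  assert (E4 : x^3-x1^3 = (x-x1)*Q) by (unfold Q; ring).
  assert (E5 : 0 <= b*v2*(x2^3-x1^3)).
  { replace (b*v2*(x2^3-x1^3)) with (v2*(b*(x2^3-x1^3))) by ring.
    rewrite E3. apply Rmult_le_pos; [lra|]. apply Rmult_le_pos; [lra|]. unfold P; nra. }
  assert (E6 : 0 < (x-x1)*(V*Q - v2*P)).
  { replace ((x-x1)*(V*Q - v2*P)) with (V*(x^3-x1^3) - b*v2*(x2^3-x1^3)).
    lra. rewrite E4. replace (b*v2*(x2^3-x1^3)) with (v2*(b*(x2^3-x1^3))) by ring.
    rewrite E3. ring. }
  assert (E7 : 0 < x - x1).
  { destruct (Rle_lt_or_eq_dec _ _ Hx1x) as [h|h]; [lra|].
    rewrite <- h in E6. lra. }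
  assert (E8 : v2*P < V*Q) by nra.
  assert (E9 : Q*(1+x2) <= P*(1+x)).
  { assert (P*(1+x) - Q*(1+x2) = (x2-x)*(x2+x+x1+(x*x2-x1^2))) by (unfold P, Q; ring).
    assert (0 <= x*x2-x1^2) by nra.
    assert (0 <= (x2-x)*(x2+x+x1+(x*x2-x1^2))) by (apply Rmult_le_pos; lra).
    lra. }
  split.
  - nra.
  - assert (v2*(1+x2) <= V*(1+x)).
    { apply (Rmult_le_reg_l Q); [lra|]. nra. }
    nra.
Qed.

Definition Up (S : R*R -> Prop) := forall p u p' u', S (p,u) -> p <= p' ->
  p*(u+1) <= p'*(u'+1) -> S (p',u').
Definition Sub (S : R*R -> Prop) := forall z, S z -> D0 z.

Lemma Dn_S n p u : Dn (S n) (p,u) <-> (p <> 0 /\ Dn n (p^2*(u+1)-1, /p)) /\ (0 < p /\ -1 < u).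
Proof. simpl. unfold Phi_preimage, D0. simpl. tauto. Qed.

Lemma up_step n : Sub (Dn n) -> Up (Dn n) -> Up (Dn (S n)).
Proof.
  intros HS HU; unfold Up; intros p u p' u' H hp hpu.
  destruct (proj1 (Dn_S n p u) H) as [[_ H0] [h0 h1]]. clear H. rename H0 into H.
  assert (hp' : 0 < p') by lra.
  assert (hu' : -1 < u').
  { assert (0 < p'*(u'+1)) by nra. nra. }
  apply (proj2 (Dn_S n p' u')). split; [split; [lra|] | lra].
  destruct (HS _ H) as [hs _]. cbn [fst] in hs.
  set (s := p^2*(u+1)-1) in *. set (s' := p'^2*(u'+1)-1).
  assert (Hv : p*(s'+1) >= p'*(s+1)).
  { unfold s, s'. assert (0 <= (p'*(u'+1) - p*(u+1))*(p*p')) by (apply Rmult_le_pos; nra). nra. }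
  clearbody s s'. apply (HU s (/p) s' (/p')); auto.
  - assert (0 <= (p'-p)*(s+1)) by (apply Rmult_le_pos; lra). assert (p*(s'-s) >= 0) by nra. nra.
  - assert (hs' : s'*(p'+1)*p >= s*(p+1)*p').
    { assert (s'*(p'+1)*p - s*(p+1)*p' >= (p'+1)*(p'*(s+1)-p) - s*(p+1)*p') by nra.
      assert ((p'+1)*(p'*(s+1)-p) - s*(p+1)*p' = (p'-p)*(p'*s+p'+1)) by ring.
      assert (0 <= (p'-p)*(p'*s+p'+1)) by (apply Rmult_le_pos; nra). lra. }
    replace (s*(/p+1)) with (s*(p+1)*p'/(p*p')) by (field; lra).
    replace (s'*(/p'+1)) with (s'*(p'+1)*p/(p*p')) by (field; lra).
    apply Rmult_le_compat_r; [apply Rlt_le, Rinv_0_lt_compat; nra | lra].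
Qed.

Lemma comb_case n p1 u1 p2 u2 t :
  Sub (Dn n) -> Up (Dn n) ->
  0 < p1 -> 0 < p2 -> p2 <= p1 -> 0 <= t <= 1 ->
  0 < p1^2*(u1+1)-1 -> 0 < p2^2*(u2+1)-1 ->
  Dn n (p2^2*(u2+1)-1, /p2) ->
  let p := t*p1+(1-t)*p2 in let u := t*u1+(1-t)*u2 in
  let mu := t*p1/p in
  p^2*(u+1)-1 < mu*(p1^2*(u1+1)-1) + (1-mu)*(p2^2*(u2+1)-1) ->
  Dn n (p^2*(u+1)-1, /p).
Proof.
  intros HS HU hp1 hp2 h12 ht hs1 hs2 G2 p u mu Hlt.
  assert (hp : 0 < p) by (unfold p; nra).
  assert (hmu : 0 <= mu <= 1).
  { unfold mu. split. apply Rmult_le_pos; [nra| apply Rlt_le, Rinv_0_lt_compat; lra].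
    apply (Rmult_le_reg_r p); [lra|]. unfold Rdiv. rewrite Rmult_assoc, Rinv_l by lra. unfold p; nra. }
  assert (hpd : p - t*p1 = (1-t)*p2) by (unfold p; ring).
  assert (h1mu : 1 - mu = (1-t)*p2/p).
  { rewrite <- hpd. unfold mu. field. lra. }
  assert (Hx : mu*/p1 + (1-mu)*/p2 = /p) by (rewrite h1mu; unfold mu; field; lra).
  destruct (key (/p1) (/p2) mu (1-mu) (p1^2*(u1+1)) (p2^2*(u2+1)) (p^2*(u+1)))
    as [K1 K2].
  - apply Rinv_0_lt_compat; lra.
  - apply Rinv_le_contravar; lra.
  - lra.
  - lra.
  - ring.
  - nra.
  - nra.
  - rewrite Hx, h1mu. unfold mu, u. field. lra.
  - lra.
  - rewrite Hx in K2.
    apply (HU (p2^2*(u2+1)-1) (/p2)); [exact G2 | lra | ].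
    rewrite !(Rplus_comm _ 1). lra.
Qed.

Lemma conv_step n : Sub (Dn n) -> Up (Dn n) -> convex_set (Dn n) -> convex_set (Dn (S n)).
Proof.
  intros HS HU HC. unfold convex_set. intros [p1 u1] [p2 u2] H1 H2 t Ht. cbn [fst snd].
  destruct (proj1 (Dn_S n p1 u1) H1) as [[_ G1] [a1 b1]].
  destruct (proj1 (Dn_S n p2 u2) H2) as [[_ G2] [a2 b2]].
  destruct (HS _ G1) as [hs1 _]. destruct (HS _ G2) as [hs2 _]. cbn [fst] in hs1, hs2.
  apply (proj2 (Dn_S n _ _)).
  assert (hp : 0 < t*p1+(1-t)*p2) by nra.
  split; [split; [lra|] | split; [lra | destruct (Rle_dec u1 u2); nra]].
  set (p := t*p1+(1-t)*p2) in *. set (u := t*u1+(1-t)*u2).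
  set (mu := t*p1/p).
  assert (hmu : 0 <= mu <= 1).
  { unfold mu. split. apply Rmult_le_pos; [nra| apply Rlt_le, Rinv_0_lt_compat; lra].
    apply (Rmult_le_reg_r p); [lra|]. unfold Rdiv. rewrite Rmult_assoc, Rinv_l by lra. unfold p; nra. }
  assert (hpd : p - t*p1 = (1-t)*p2) by (unfold p; ring).
  assert (h1mu : 1 - mu = (1-t)*p2/p).
  { rewrite <- hpd. unfold mu. field. lra. }
  assert (Hx : mu*/p1 + (1-mu)*/p2 = /p) by (rewrite h1mu; unfold mu; field; lra).
  destruct (Rle_lt_dec (mu*(p1^2*(u1+1)-1) + (1-mu)*(p2^2*(u2+1)-1)) (p^2*(u+1)-1)) as [hB|hB].
  - pose proof (HC _ _ G1 G2 mu hmu) as HQ. cbn [fst snd] in HQ. rewrite Hx in HQ.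
    apply (HU _ _ _ _ HQ hB).
    assert (0 < /p + 1) by (pose proof (Rinv_0_lt_compat p hp); lra).
    apply Rmult_le_compat_r; lra.
  - destruct (Rle_lt_dec p2 p1) as [h12|h12].
    + exact (comb_case n p1 u1 p2 u2 t HS HU a1 a2 h12 Ht hs1 hs2 G2 hB).
    + assert (E : p = (1-t)*p2 + (1-(1-t))*p1) by (unfold p; ring).
      assert (Eu : u = (1-t)*u2 + (1-(1-t))*u1) by (unfold u; ring).
      assert (Em : (1-t)*p2/p = 1 - mu) by lra.
      pose proof (comb_case n p2 u2 p1 u1 (1-t) HS HU a2 a1 (Rlt_le _ _ h12) ltac:(lra) hs2 hs1 G1) as C.
      cbn zeta in C. rewrite <- E, <- Eu, Em in C. apply C.
      replace (1 - (1-mu)) with mu by ring. lra.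
Qed.

Lemma all_inv n : Sub (Dn n) /\ Up (Dn n) /\ convex_set (Dn n).
Proof.
  induction n as [|n [IS [IU IC]]].
  - split; [|split].
    + intros z h; exact h.
    + intros p u p' u' [h0 h1] hp hpu. cbn [fst snd] in *. split; cbn [fst snd]; [lra|].
      assert (0 < p'*(u'+1)) by nra. nra.
    + intros [p1 u1] [p2 u2] [a1 b1] [a2 b2] t Ht. cbn [fst snd] in *. split; cbn [fst snd]; [destruct (Rle_dec p1 p2); nra | destruct (Rle_dec u1 u2); nra].
  - split; [|split].
    + intros [p u] h. destruct (proj1 (Dn_S n p u) h) as [_ h']. exact h'.
    + apply up_step; auto.
    + apply conv_step; auto.
Qed.

Theorem proposition2 : forall n : nat, convex_set (Dn n).
Proof. intro n. apply (all_inv n). Qed.
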